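(* Let $N\ge3$, $h>0$, and let $D$ be the periodic second-order central difference matrix ($D_{k,k+1}=\tfrac1{2h}$, $D_{k,k-1}=-\tfrac1{2h}$, indices mod $N$, all other entries zero). Let $J(\mathbf u)$ be the Jacobian of $\mathcal R_k(\mathbf u)=-2\sum_jD_{kj}F^\star_{\log}(u_k,u_j)$ with the logarithmic mean $F^\star_{\log}(u,v)=(v-u)/(\log v-\log u)$. Fix an index $i$, constants $\delta_+,\delta_->0$ with $\delta_+\ne\delta_-$, and constants $U_k>0$ for $k\notin\{i-1,i,i+1\}$. For $\varepsilon>0$ define $u^\varepsilon_i=\varepsilon$, $u^\varepsilon_{i\pm1}=\delta_\pm h+\varepsilon$, and $u^\varepsilon_k=U_k+\varepsilon$ otherwise. Then $|\operatorname{tr}(J(\mathbf u^\varepsilon)^2)|\to\infty$ and hence the spectral radius $\rho(J(\mathbf u^\varepsilon))\ge\sqrt{|\operatorname{tr}(J^2)|/N}\to\infty$ as $\varepsilon\to0^+$.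
   Context: The Jacobian is $J_{ik}=-2D_{ik}\partial_2F^\star(u_i,u_k)-2\delta_{ik}\sum_jD_{ij}\partial_1F^\star(u_i,u_j)$; explicitly with $r_j=u_j/u_i$, $J_{ij}=-2D_{ij}\frac{\log r_j-1+1/r_j}{\log^2 r_j}$ for $i\ne j$ and $J_{ii}=-2\sum_{k\ne i}D_{ik}\frac{r_k-\log r_k-1}{\log^2r_k}$. *)

(* Defs.v *)
From HB Require Import structures.
From mathcomp Require Import all_boot all_order all_algebra.
From mathcomp Require Import all_classical all_reals all_analysis.
From mathcomp Require Import complex.
Set Implicit Arguments.
Unset Strict Implicit.
Unset Printing Implicit Defensive.
Import Order.TTheory GRing.Theory Num.Theory.
Local Open Scope ring_scope.

Section Defs.
Variable R : realType.

Definition Dmat (N : nat) (h : R) : 'M[R]_N :=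
  \matrix_(k, j) (if j == ordS k then (2 * h)^-1
                  else if j == ord_pred k then - (2 * h)^-1 else 0).

Definition Flog (u v : R) : R :=
  if u == v then u else (v - u) / (ln v - ln u).

(* partial derivatives of F*_log w.r.t. first / second argument, with
   r = v/u; at r = 1 they take their (continuous) value 1/2 *)
Definition dFlog1 (u v : R) : R :=
  if u == v then 2^-1
  else let r := v / u in (r - ln r - 1) / (ln r) ^+ 2.
Definition dFlog2 (u v : R) : R :=
  if u == v then 2^-1
  else let r := v / u in (ln r - 1 + r^-1) / (ln r) ^+ 2.

Definition resid (N : nat) (h : R) (u : 'I_N -> R) (k : 'I_N) : R :=
  -2 * \sum_j Dmat N h k j * Flog (u k) (u j).

(* Jacobian of resid:
   J_ik = -2 D_ik d2F(u_i,u_k) - 2 delta_ik sum_j D_ij d1F(u_i,u_j) *)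
Definition Jac (N : nat) (h : R) (u : 'I_N -> R) : 'M[R]_N :=
  \matrix_(a, b) (-2 * Dmat N h a b * dFlog2 (u a) (u b)
                  - 2 * (a == b)%:R * \sum_j Dmat N h a j * dFlog1 (u a) (u j)).

Definition ueps (N : nat) (h : R) (i : 'I_N) (dp dm : R) (U : 'I_N -> R)
  (eps : R) : 'I_N -> R :=
  fun k => if k == i then eps
           else if k == ordS i then dp * h + eps
           else if k == ord_pred i then dm * h + eps
           else U k + eps.

Definition spectral_radius (n : nat) (A : 'M[R]_n) : R :=
  sup [set ComplexField.Normc.normc l | l in [set l : R[i] |
        eigenvalue (map_mx (fun x : R => x%:C%C) A) l]].

End Defs.

(* Main.v *)
Require Import Defs.
From HB Require Import structures.
From mathcomp Require Import all_boot all_order all_algebra.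
From mathcomp Require Import all_classical all_reals all_analysis.
From mathcomp Require Import complex spectral.
From mathcomp Require Import zify.
From mathcomp Require Import lra ring.
Import Order.TTheory GRing.Theory Num.Theory.
Import numFieldNormedType.Exports numFieldTopology.Exports.
Local Open Scope classical_set_scope.
Local Open Scope ring_scope.

Section Spec.
Local Open Scope complex_scope.
Lemma normcC (R : realType) (z : R[i]) : `|z| = (ComplexField.Normc.normc z)%:C.
Proof. by case: z. Qed.

Lemma normc_ge0' (R : realType) (z : R[i]) : 0 <= ComplexField.Normc.normc z.
Proof. by case: z => a b /=; rewrite sqrtr_ge0. Qed.

Lemma spec_bound (R : realType) n (A : 'M[R]_n) : (0 < n)%N ->
  Num.sqrt (`|\tr (A *m A)| / n%:R) <= spectral_radius A.
Proof.
move=> n0.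
set Ac := map_mx (fun x : R => x%:C) A.
have [P Pu Ptrig] := Schur Ac n0.
have PU : P \in unitmx by exact: unitarymx_unit.
set T := conjmx P Ac in Ptrig.
have hT : T = P *m Ac *m invmx P by rewrite /T conjumx.
have eigT k : eigenvalue Ac (T k k).
  have := @eigenvalue_conjmx _ _ _ P Ac (stablemx_unit _ PU).
  rewrite row_free_unit => /(_ PU (T k k)); apply.
  rewrite [_ \in _]eigenvalue_root_char -/T char_poly_trig // rootE horner_prod.
  rewrite (bigD1 k) //= !hornerE subrr mul0r //.
have eigA l : eigenvalue Ac l -> exists k, l = T k k.
  move=> el.
  have PiU : invmx P \in unitmx by rewrite unitmx_inv.
  have := @eigenvalue_conjmx _ _ _ (invmx P) T (stablemx_unit _ PiU).
  rewrite row_free_unit /T conjmxK // => /(_ PiU l el).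
  rewrite [_ \in _]eigenvalue_root_char char_poly_trig // rootE horner_prod.
  move/prodf_eq0 => [k _]; rewrite !hornerE subr_eq0 => /eqP ->.
  by exists k.
pose S := [set ComplexField.Normc.normc l | l in [set l : R[i] | eigenvalue Ac l]].
have hS : has_sup S.
  split.
    exists (ComplexField.Normc.normc (T (Ordinal n0) (Ordinal n0))).
    by exists (T (Ordinal n0) (Ordinal n0)) => //; exact: eigT.
  exists (\sum_k ComplexField.Normc.normc (T k k)) => _ [l /eigA [k ->] <-].
  rewrite (bigD1 k) //= lerDl sumr_ge0 // => j _; exact: normc_ge0'.
set rho := spectral_radius A.
have hrho k : ComplexField.Normc.normc (T k k) <= spectral_radius A.
  by apply: (@sup_upper_bound _ S) => //; exists (T k k) => //; exact: eigT.
have rho0 : 0 <= rho.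
  exact: le_trans (normc_ge0' _ _) (hrho (Ordinal n0)).
have htr : (\tr (A *m A))%:C = \sum_k (T k k) ^+ 2.
  have -> : (\tr (A *m A))%:C = \tr (Ac *m Ac).
    rewrite /mxtrace rmorph_sum; apply: eq_bigr => k _.
    rewrite !mxE rmorph_sum; apply: eq_bigr => j _; by rewrite !mxE rmorphM.
  have -> : Ac *m Ac = invmx P *m (T *m T) *m P.
    by rewrite hT !mulmxA mulVmx // mul1mx !mulmxKV.
  rewrite mxtrace_mulC mulmxA mulmxV // mul1mx /mxtrace.
  apply: eq_bigr => k _; rewrite mxE (bigD1 k) //= big1 ?addr0 ?expr2 //.
  move=> j jk; move/is_trig_mxP: Ptrig => Ht.
  case: (ltngtP k j) => [kj|jk'|/val_inj e]; last by rewrite e eqxx in jk.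
    by rewrite Ht // mul0r.
  by rewrite (Ht j k) // mulr0.
have key : `|\tr (A *m A)| <= n%:R * rho ^+ 2.
  rewrite -lecR.
  have -> : (`|\tr (A *m A)|)%:C = `|(\tr (A *m A))%:C|.
    by rewrite normcC /=; congr (_%:C); rewrite /= expr0n /= addr0 sqrtr_sqr.
  rewrite htr; apply: le_trans (ler_norm_sum _ _ _) _.
  have -> : n%:R * rho ^+ 2 = \sum_(k < n) rho ^+ 2.
    by rewrite sumr_const card_ord mulr_natl.
  rewrite rmorph_sum; apply: ler_sum => k _.
  rewrite normrX normcC -rmorphXn lecR lerXn2r ?nnegrE ?normc_ge0' //.
rewrite -[X in _ <= X](ger0_norm rho0) -[X in _ <= X]sqrtr_sqr ler_sqrt ?sqr_ge0 //.
rewrite ler_pdivrMr ?ltr0n // mulrC (le_trans key) //.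
Qed.
End Spec.

Section A.
Variable R : realType.

Let phi (r : R) := (ln r - 1 + r^-1) / (ln r) ^+ 2.

Lemma dF2_bnd (C1 C2 : R) : 0 < C1 -> 0 < C2 ->
 \forall e \near 0^'+, `|dFlog2 (C1+e) (C2+e)| <= `|dFlog2 C1 C2| + 1.
Proof.
move=> h1 h2.
have [->|neq] := eqVneq C1 C2.
  by near=> e; rewrite /dFlog2 !eqxx lerDl.
have he : (e : R) @[e --> 0^'+] --> 0.
  apply/cvgrPdist_lt => d d0; near=> e.
  have e0 : 0 < e by near: e; exact: nbhs_right_gt.
  have e1 : e < d by near: e; exact: nbhs_right_lt.
  by rewrite sub0r normrN gtr0_norm.
have hr : ((C2 + e) / (C1 + e) : R) @[e --> 0^'+] --> (C2 / C1 : R).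
  apply: cvgM; first by rewrite -[X in _ --> X]addr0; apply: cvgD => //; exact: cvg_cst.
  apply: cvgV; first by rewrite gt_eqF.
  by rewrite -[X in _ --> X]addr0; apply: cvgD => //; exact: cvg_cst.
have r0 : 0 < C2 / C1 by rewrite divr_gt0.
have hl : (ln ((C2 + e) / (C1 + e)) : R) @[e --> 0^'+] --> (ln (C2 / C1) : R).
  exact: (cvg_comp _ _ hr (continuous_ln r0)).
have l0 : ln (C2 / C1) != 0.
  rewrite ln_eq0 //; apply: contra neq => /=  /eqP/(congr1 (fun x => x * C1)).
  rewrite divfK ?(lt0r_neq0 h1) // => E. by rewrite E mul1r.
have hphi : (phi ((C2 + e) / (C1 + e)) : R) @[e --> 0^'+] --> (phi (C2 / C1) : R).
  apply: cvgM; last first.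
    apply: cvgV; first by rewrite expf_neq0.
    by rewrite expr2; apply: cvgM.
  apply: cvgD; last by apply: cvgV; [rewrite gt_eqF|].
  by apply: cvgB => //; exact: cvg_cst.
move/cvgrPdist_le : hphi => /(_ 1 ltr01).
apply: filterS => e; rewrite /dFlog2 (negPf neq).
have -> : (C1 + e == C2 + e) = false by rewrite (can_eq (addrK e)) (negPf neq).
move=> H.
have : `|phi ((C2 + e) / (C1 + e))| <= `|phi (C2 / C1)| + 1.
  rewrite -[X in `|X| <= _](subrKC (phi (C2/C1))) (le_trans (ler_normD _ _)) //.
  by rewrite lerD2l distrC.
by [].
Unshelve. all: by end_near.
Qed.
Lemma nb_bound (C e : R) : 0 < C -> 0 < e -> 1 <= ln (1 + C / e) ->
  `|dFlog2 e (C+e)| * `|dFlog2 (C+e) e| <= C / e.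
Proof.
move=> C0 e0 L1.
set x := C / e.
have x0 : 0 < x by rewrite divr_gt0.
have hr : (C + e) / e = 1 + x by rewrite mulrDl divff ?gt_eqF // addrC.
have hr' : e / (C + e) = (1 + x)^-1 by rewrite -hr invf_div.
have ne : (e == C + e) = false by rewrite eq_sym -subr_eq0 addrK gt_eqF.
have ne' : (C + e == e) = false by rewrite -subr_eq0 addrK gt_eqF.
rewrite /dFlog2 ne ne' /= hr hr' lnV ?posrE ?addr_gt0 // invrK sqrrN.
set L := ln (1 + x) in L1 *.
have Lx : L <= x by apply: le_ln1Dx; lra.
have L0 : 0 < L by lra.
have i1 : 0 < (1 + x)^-1 by rewrite invr_gt0 addr_gt0.
have i2 : (1 + x)^-1 <= 1 by rewrite invf_le1 ?addr_gt0 //; lra.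
have LL : 1 <= L ^+ 2 by rewrite expr2; nra.
have LL0 : 0 < L ^+ 2 by lra.
rewrite !normrM !ger0_norm ?invr_ge0 ?(ltW LL0) //; last by lra.
  rewrite -[X in _ <= X]mul1r; apply: ler_pM.
  - by apply: mulr_ge0; [lra|rewrite invr_ge0; lra].
  - by apply: mulr_ge0; [lra|rewrite invr_ge0; lra].
  - by rewrite ler_pdivrMr // mul1r expr2; nra.
  - by rewrite ler_pdivrMr //; nra.
lra.
Qed.
Lemma dF1E (C e : R) : 0 < C -> 0 < e ->
  dFlog1 e (C + e) = (C / e - ln (1 + C / e)) / (ln (1 + C / e)) ^+ 2.
Proof.
move=> C0 e0.
have hr : (C + e) / e = 1 + C / e by rewrite mulrDl divff ?gt_eqF // addrC.
have ne : (e == C + e) = false by rewrite eq_sym -subr_eq0 addrK gt_eqF.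
rewrite /dFlog1 ne /= hr; congr (_ / _); ring.
Qed.

Lemma diff_lb (a b e : R) : 0 < b -> b < a -> 0 < e ->
  1 <= ln (1 + b / e) ->
  2 * b * (ln (1 + a / e)) ^+ 2 <= (a + b) * (ln (1 + b / e)) ^+ 2 ->
  (a - b) / e / (2 * (ln (1 + a / e)) ^+ 2) <= dFlog1 e (a + e) - dFlog1 e (b + e).
Proof.
move=> b0 ba e0 Lb1 H.
have a0 : 0 < a by lra.
rewrite !dF1E //.
have xab : b / e <= a / e by rewrite ler_pM2r ?invr_gt0 //; lra.
have LaLb : ln (1 + b / e) <= ln (1 + a / e).
  by rewrite ler_ln ?posrE ?addr_gt0 ?divr_gt0 // lerD2l.
set La := ln (1 + a / e) in H LaLb *.
set Lb := ln (1 + b / e) in Lb1 H LaLb *.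
have H' : 2 * (b / e) * La ^+ 2 <= (a / e + b / e) * Lb ^+ 2.
  rewrite (_ : 2 * (b / e) * La ^+ 2 = (2 * b * La ^+ 2) / e); last by ring.
  rewrite (_ : (a / e + b / e) * Lb ^+ 2 = ((a + b) * Lb ^+ 2) / e); last by ring.
  by rewrite ler_pM2r ?invr_gt0.
set xa := a / e in xab H' *.
set xb := b / e in xab H' *.
have La0 : 0 < La by lra.
have Lb0 : 0 < Lb by lra.
rewrite -subr_ge0.
have -> : (xa - La) / La ^+ 2 - (xb - Lb) / Lb ^+ 2 - (a - b) / e / (2 * La ^+ 2)
   = ((xa + xb) * Lb ^+ 2 - 2 * xb * La ^+ 2 + 2 * La * Lb * (La - Lb))
      / (2 * La ^+ 2 * Lb ^+ 2).
  rewrite /xa /xb; field; rewrite ?gt_eqF //; lra.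
apply: divr_ge0; last by rewrite !mulr_ge0 ?exprn_ge0 //; lra.
have : 0 <= 2 * La * Lb * (La - Lb) by rewrite !mulr_ge0 //; lra.
lra.
Qed.
Lemma near_ln (C K : R) : 0 < C ->
  \forall e \near 0^'+, K <= ln (1 + C / e).
Proof.
move=> C0; near=> e.
have e0 : 0 < e by near: e; exact: nbhs_right_gt.
have e1 : e < C / expR K.
  by near: e; apply: nbhs_right_lt; rewrite divr_gt0 // expR_gt0.
have h1 : expR K < C / e.
  by rewrite ltr_pdivlMr // mulrC -ltr_pdivlMr ?expR_gt0.
rewrite -[X in X <= _]expRK ler_ln ?posrE ?expR_gt0 //.
  apply: (le_trans (ltW h1)); rewrite lerDr //.
by rewrite addr_gt0 ?divr_gt0.
Unshelve. all: by end_near.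
Qed.

Lemma cond_ev (a b : R) : 0 < b -> b < a ->
  \forall e \near 0^'+, 1 <= ln (1 + b / e) /\
     2 * b * ln (1 + a / e) ^+ 2 <= (a + b) * ln (1 + b / e) ^+ 2.
Proof.
move=> b0 ba.
have a0 : 0 < a by lra.
set D := ln (a / b).
have D0 : 0 <= D by apply: ln_ge0; rewrite ler_pdivlMr // mul1r; lra.
set K := (4 * b * D + 2 * b * D ^+ 2) / (a - b).
near=> e.
have e0 : 0 < e by near: e; exact: nbhs_right_gt.
have h1 : 1 <= ln (1 + b / e) by near: e; exact: near_ln.
have h2 : K <= ln (1 + b / e) by near: e; exact: near_ln.
split => //.
have pa : 0 < 1 + a / e by have := divr_gt0 a0 e0; lra.
have pb : 0 < 1 + b / e by have := divr_gt0 b0 e0; lra.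
have hD : ln (1 + a / e) <= ln (1 + b / e) + D.
  have : ln ((1 + a / e) / (1 + b / e)) <= D.
    rewrite ler_ln ?posrE ?divr_gt0 //.
    rewrite ler_pdivrMr // mulrDr mulr1.
    have -> : a / b * (b / e) = a / e by field; rewrite ?gt_eqF.
    have : 1 <= a / b by rewrite ler_pdivlMr // mul1r; lra.
    lra.
  rewrite ln_div ?posrE //; lra.
have La0 : 0 <= ln (1 + a / e).
  by apply: ln_ge0; have := divr_gt0 a0 e0; lra.
set La := ln (1 + a / e) in hD La0 *.
set Lb := ln (1 + b / e) in h1 h2 hD *.
have hK : 4 * b * D + 2 * b * D ^+ 2 <= (a - b) * Lb.
  by move: h2; rewrite /K ler_pdivrMr ?subr_gt0 // [Lb * _]mulrC.
have hsq : La ^+ 2 <= (Lb + D) ^+ 2 by apply: lerXn2r; rewrite ?nnegrE //; lra.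
have h3 : (4 * b * D + 2 * b * D ^+ 2) * Lb <= (a - b) * Lb * Lb.
  by rewrite ler_pM2r //; lra.
have h4 : 2 * b * D ^+ 2 <= 2 * b * D ^+ 2 * Lb.
  by rewrite ler_peMr // !mulr_ge0 ?exprn_ge0 //; lra.
have h5 : 2 * b * La ^+ 2 <= 2 * b * (Lb + D) ^+ 2 by rewrite ler_pM2l //; lra.
have e1 : (Lb + D) ^+ 2 = Lb * Lb + 2 * Lb * D + D ^+ 2 by ring.
rewrite e1 in h5.
have e2 : (a + b) * Lb ^+ 2 = (a - b) * Lb * Lb + 2 * b * (Lb * Lb) by ring.
rewrite e2.
have e3 : (4 * b * D + 2 * b * D ^+ 2) * Lb = 4 * b * (D * Lb) + 2 * b * D ^+ 2 * Lb by ring.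
rewrite e3 in h3.
have e4 : 2 * b * (Lb * Lb + 2 * Lb * D + D ^+ 2) = 2 * b * (Lb * Lb) + 4 * b * (D * Lb) + 2 * b * D ^+ 2 by ring.
rewrite e4 in h5.
lra.
Unshelve. all: by end_near.
Qed.

Lemma Jd_lt (a b : R) : 0 < b -> b < a ->
  \forall e \near 0^'+, (a - b) ^+ 2 / 4 * (e^-1) ^+ 2 / ln (1 + a / e) ^+ 4
     <= (dFlog1 e (a + e) - dFlog1 e (b + e)) ^+ 2.
Proof.
move=> b0 ba; have a0 : 0 < a by lra.
near=> e.
have e0 : 0 < e by near: e; exact: nbhs_right_gt.
have [h1 h2] : 1 <= ln (1 + b / e) /\
     2 * b * ln (1 + a / e) ^+ 2 <= (a + b) * ln (1 + b / e) ^+ 2.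
  by near: e; exact: cond_ev.
have := @diff_lb a b e b0 ba e0 h1 h2.
have La : 0 < ln (1 + a / e).
  apply: ln_gt0; have := divr_gt0 a0 e0; lra.
set La' := ln (1 + a / e) in La *.
move=> H.
have H0 : 0 <= (a - b) / e / (2 * La' ^+ 2).
  by rewrite !divr_ge0 ?mulr_ge0 ?exprn_ge0 //; lra.
have H2 : ((a - b) / e / (2 * La' ^+ 2)) ^+ 2
   <= (dFlog1 e (a + e) - dFlog1 e (b + e)) ^+ 2.
  by apply: lerXn2r; rewrite ?nnegrE //; exact: le_trans H0 H.
apply: le_trans H2; rewrite le_eqVlt; apply/orP; left; apply/eqP.
field; rewrite ?gt_eqF //.
Unshelve. all: by end_near.
Qed.

Lemma Jdiff_ev (p q : R) : 0 < p -> 0 < q -> p != q ->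
  exists2 A : R, 0 < A & \forall e \near 0^'+,
   (p - q) ^+ 2 / 4 * (e^-1) ^+ 2 / ln (1 + A / e) ^+ 4
     <= (dFlog1 e (p + e) - dFlog1 e (q + e)) ^+ 2.
Proof.
move=> p0 q0; rewrite neq_lt => /orP[pq|qp].
  exists q => //; have := @Jd_lt q p p0 pq; apply: filterS => e.
  by rewrite -sqrrN opprB -[X in _ <= X]sqrrN opprB.
by exists p => //; exact: (@Jd_lt p q q0 qp).
Qed.
Lemma ln4_le (y : R) : 1 <= y -> ln y ^+ 4 <= (8 ^+ 4) * Num.sqrt y.
Proof.
move=> y1.
have y0 : 0 < y by lra.
set w := Num.sqrt (Num.sqrt (Num.sqrt y)).
have w0 : 0 < w by rewrite !sqrtr_gt0.
have w4 : w ^+ 4 = Num.sqrt y.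
  by rewrite -[4%N]/(2 * 2)%N exprM !sqr_sqrtr ?sqrtr_ge0.
have w8 : w ^+ 8 = y.
  by rewrite -[8%N]/(4 * 2)%N exprM w4 sqr_sqrtr // ltW.
have lw : ln y = 8 * ln w.
  by rewrite -[in LHS]w8 lnXn // mulr_natl.
have lw0 : 0 <= ln w.
  have := ln_ge0 y1; rewrite lw; lra.
have lww : ln w <= w by apply: ltW; exact: ln_sublinear.
rewrite lw -w4 exprMn.
by rewrite ler_pM2l //; apply: lerXn2r; rewrite ?nnegrE //; lra.
Qed.

Lemma growth (c A K1 K2 M : R) : 0 < c -> 0 < A ->
  \forall e \near 0^'+,
     M <= c * (e^-1) ^+ 2 / ln (1 + A / e) ^+ 4 - K1 * e^-1 - K2.
Proof.
move=> c0 A0.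
have p8 : 0 < (8:R) ^+ 4 by rewrite exprn_gt0.
set c' := c / ((8 ^+ 4) * (1 + A)).
have c'0 : 0 < c' by rewrite divr_gt0 // mulr_gt0 //; lra.
set S0 := 1 + `|K2| + `|M| + (`|K1| + 1) / c'.
have S00 : 1 <= S0.
  have : 0 <= (`|K1| + 1) / c' by rewrite divr_ge0 //; lra.
  rewrite /S0; have := normr_ge0 K2; have := normr_ge0 M; lra.
near=> e.
have e0 : 0 < e by near: e; exact: nbhs_right_gt.
have e1 : e < (S0 ^+ 2)^-1.
  by near: e; apply: nbhs_right_lt; rewrite invr_gt0 exprn_gt0 //; lra.
set x := e^-1.
have xS : S0 ^+ 2 < x by rewrite /x -[X in X < _]invrK ltf_pV2 ?posrE ?invr_gt0 ?exprn_gt0 //; lra.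
set s := Num.sqrt x.
have x0 : 0 < x by rewrite invr_gt0.
have sx : s ^+ 2 = x by rewrite sqr_sqrtr // ltW.
have sS : S0 < s.
  by rewrite -(ltr_pXn2r (n:=2)) ?nnegrE ?sqrtr_ge0 // ?sx //; lra.
have s1 : 1 <= s by lra.
have y1 : 1 <= 1 + A * x by have := mulr_gt0 A0 x0; lra.
have hl := ln4_le (1 + A * x) y1.
have hy : Num.sqrt (1 + A * x) <= (1 + A) * s.
  have : 1 + A * x <= ((1 + A) * s) ^+ 2.
    rewrite exprMn sx; have : 1 <= x by nra.
    have : 1 + A <= (1 + A) ^+ 2 by rewrite expr2; nra.
    nra.
  rewrite -ler_sqrt ?exprn_ge0 //; last by apply: mulr_ge0; lra.
  by rewrite sqrtr_sqr ger0_norm //; apply: mulr_ge0; lra.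
set L := ln (1 + A * x) in hl *.
have L0 : 0 < L ^+ 4.
  have : 0 < L by apply: ln_gt0; have := mulr_gt0 A0 x0; lra.
  by move=> H; rewrite exprn_gt0.
have hL : L ^+ 4 <= (8 ^+ 4) * (1 + A) * s.
  rewrite -mulrA; apply: (le_trans hl); rewrite ler_pM2l //.
have key : c' * s ^+ 3 <= c * x ^+ 2 / L ^+ 4.
  rewrite ler_pdivlMr // -sx /c'.
  have -> : c / ((8 ^+ 4) * (1 + A)) * s ^+ 3 * L ^+ 4 = c * s ^+ 3 * (L ^+ 4 / ((8 ^+ 4) * (1 + A))).
    by field; lra.
  have -> : c * (s ^+ 2) ^+ 2 = c * s ^+ 3 * s by ring.
  rewrite ler_pM2l ?mulr_gt0 ?exprn_gt0 //; try lra.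
  by rewrite ler_pdivrMr; [rewrite mulrC|lra].
have hK1 : K1 * x <= `|K1| * s ^+ 2 by rewrite sx; apply: ler_wpM2r; [exact: ltW|exact: ler_norm].
have hK2 : K2 <= `|K2| by exact: ler_norm.
have hM : M <= `|M| by exact: ler_norm.
have cs : `|K1| + 1 <= c' * s.
  have : (`|K1| + 1) / c' <= s by rewrite /S0 in sS; have := normr_ge0 K2; have := normr_ge0 M; lra.
  by rewrite ler_pdivrMr // mulrC.
have : `|K2| + `|M| <= s.
  have : 0 <= (`|K1| + 1) / c'.
    by apply: divr_ge0; [have := normr_ge0 K1; lra| lra].
  rewrite /S0 in sS; lra.
have : s <= s ^+ 2 by rewrite expr2 ler_peMr //; lra.
have e3 : c' * s ^+ 3 = s ^+ 2 * (c' * s) by ring.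
have h3 : s ^+ 2 * (`|K1| + 1) <= s ^+ 2 * (c' * s) by rewrite ler_wpM2l ?exprn_ge0 //; lra.
rewrite mulrDr mulr1 in h3.
rewrite mulrC in hK1.
lra.
Unshelve. all: by end_near.
Qed.
End A.

Lemma ordS_neq {N} (k : 'I_N) : (3 <= N)%N -> ordS k != k.
Proof.
move=> hN; apply/eqP => /(congr1 val) /=.
have := ltn_ord k.
case: (ltngtP k.+1 N) => h.
- by rewrite modn_small //; lia.
- lia.
- by rewrite h modnn; lia.
Qed.
Lemma ordSS_neq {N} (k : 'I_N) : (3 <= N)%N -> ordS (ordS k) != k.
Proof.
move=> hN; apply/eqP => /(congr1 val) /=.
have := ltn_ord k.
case: (ltngtP k.+1 N) => h.
- rewrite (modn_small h) /=.
  case: (ltngtP k.+2 N) => h2.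
  + rewrite (modn_small h2); lia.
  + lia.
  + rewrite h2 modnn; lia.
- lia.
- rewrite h modnn /= modn_small; lia.
Qed.
Lemma ord_pred_neq {N} (k : 'I_N) : (3 <= N)%N -> ord_pred k != k.
Proof.
move=> hN; apply/eqP => E; have := ordS_neq (ord_pred k) hN.
by rewrite ord_predK E eqxx.
Qed.
Lemma ordS_pred_neq {N} (k : 'I_N) : (3 <= N)%N -> ordS k != ord_pred k.
Proof.
move=> hN; apply/eqP => E; have := ordSS_neq k hN.
by rewrite E ord_predK eqxx.
Qed.

Section B.
Variable R : realType.
Variables (N : nat) (h : R).
Hypothesis hN : (3 <= N)%N.
Hypothesis hh : 0 < h.

Lemma Dmat_diag (a : 'I_N) : Dmat N h a a = 0.
Proof.
by rewrite mxE eq_sym (negPf (ordS_neq a hN)) eq_sym (negPf (ord_pred_neq a hN)).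
Qed.

Lemma Dmat_abs (a b : 'I_N) : `|Dmat N h a b| <= (2 * h)^-1.
Proof.
have c0 : 0 <= (2 * h)^-1 by rewrite invr_ge0; have := hh; lra.
rewrite mxE; case: ifP => _; first by rewrite ger0_norm.
by case: ifP => _; rewrite ?normrN ?ger0_norm ?normr0.
Qed.

Lemma Jac_off (u : 'I_N -> R) (a b : 'I_N) : a != b ->
  `|Jac h u a b| <= h^-1 * `|dFlog2 (u a) (u b)|.
Proof.
move=> ab; rewrite mxE (negPf ab) mulr0 mul0r subr0 !normrM normrN.
rewrite normr_nat; apply: ler_wpM2r => //.
have -> : h^-1 = 2 * (2 * h)^-1 by field; have := hh; lra.
by apply: ler_wpM2l => //; exact: Dmat_abs.
Qed.

Lemma Jac_diag (u : 'I_N -> R) (k : 'I_N) :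
  Jac h u k k = - h^-1 * (dFlog1 (u k) (u (ordS k)) - dFlog1 (u k) (u (ord_pred k))).
Proof.
rewrite mxE Dmat_diag eqxx mulr0 mul0r sub0r mulr1.
rewrite (bigD1 (ordS k)) //= (bigD1 (ord_pred k)) /=; last first.
  by rewrite eq_sym ordS_pred_neq.
rewrite big1 ?addr0; last first.
  move=> j /andP[j1 j2]; rewrite mxE (negPf j2) (negPf j1) mul0r //.
rewrite !mxE eqxx eq_sym (negPf (ordS_pred_neq k hN)) eqxx.
field; have := hh; lra.
Qed.

Lemma tr_lb (A : 'M[R]_N) (i : 'I_N) :
  A i i ^+ 2 - \sum_a \sum_b (a != b)%:R * (`|A a b| * `|A b a|) <= \tr (A *m A).
Proof.
have H : forall a b : 'I_N, 0 <= A a b * A b a + (a != b)%:R * (`|A a b| * `|A b a|).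
  move=> a b; case: eqP => [->|_]; first by rewrite mul0r addr0 -expr2 sqr_ge0.
  rewrite mul1r -normrM; have := ler_norm (- (A a b * A b a)).
  rewrite normrN; lra.
have E : \tr (A *m A) = \sum_a \sum_b A a b * A b a.
  by rewrite /mxtrace; apply: eq_bigr => a _; rewrite !mxE.
rewrite E.
rewrite lerBlDr -big_split /=.
under eq_bigr do rewrite -big_split /=.
rewrite (bigD1 i) //= (bigD1 i) //= eqxx mul0r addr0 -expr2 -!addrA lerDl.
by apply: addr_ge0; apply: sumr_ge0 => a _ //; apply: sumr_ge0.
Qed.
End B.

Lemma part1 (R : realType) (N : nat) (hN : (3 <= N)%N) (h : R)
  (hh : 0 < h) (i : 'I_N) (dp dm : R) (hdp : 0 < dp) (hdm : 0 < dm)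
  (hd : dp != dm) (U : 'I_N -> R)
  (hU : forall k : 'I_N, k != i -> k != ordS i -> k != ord_pred i -> 0 < U k) :
  (`| \tr (Jac h (ueps h i dp dm U eps) *m Jac h (ueps h i dp dm U eps)) |
     @[eps --> 0^'+] --> +oo).
Proof.
pose Cc (k : 'I_N) : R := if k == i then 0 else if k == ordS i then dp * h
  else if k == ord_pred i then dm * h else U k.
have hu e k : ueps h i dp dm U e k = Cc k + e.
  rewrite /ueps /Cc; case: ifP => _; first by rewrite add0r.
  by case: ifP => _ //; case: ifP.
have hC k : k != i -> 0 < Cc k.
  move=> ki; rewrite /Cc (negPf ki); case: ifP => k1; first exact: mulr_gt0.
  case: ifP => k2; first exact: mulr_gt0.
  exact: hU ki (negbT k1) (negbT k2).
have Ci : Cc i = 0 by rewrite /Cc eqxx.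
have CS : Cc (ordS i) = dp * h by rewrite /Cc (negPf (ordS_neq i hN)) eqxx.
have CP : Cc (ord_pred i) = dm * h.
  rewrite /Cc (negPf (ord_pred_neq i hN)) eq_sym.
  by rewrite (negPf (ordS_pred_neq i hN)) eqxx.
have C0 k : 0 <= Cc k by case: (eqVneq k i) => [->|/hC/ltW//]; rewrite Ci.
pose Msum := \sum_k Cc k.
have hM k : Cc k <= Msum.
  by rewrite /Msum (bigD1 k) //= lerDl sumr_ge0.
have M0 : 0 <= Msum by rewrite sumr_ge0.
pose Kp (a b : 'I_N) := (`|dFlog2 (Cc a) (Cc b)| + 1) * (`|dFlog2 (Cc b) (Cc a)| + 1).
have Kp0 a b : 0 <= Kp a b by rewrite mulr_ge0 // addr_ge0.
pose K1 := \sum_(a : 'I_N) \sum_(b : 'I_N) h^-2 * Msum.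
pose K2 := \sum_a \sum_b h^-2 * Kp a b.
have hdh : dp * h != dm * h.
  by apply: contra hd => /eqP /(mulIf (lt0r_neq0 hh)) ->.
have [A A0 hA] := @Jdiff_ev R (dp * h) (dm * h) (mulr_gt0 hdp hh) (mulr_gt0 hdm hh) hdh.
pose c := (dp * h - dm * h) ^+ 2 / 4 / h ^+ 2.
have c0 : 0 < c.
  apply: divr_gt0; last exact: exprn_gt0.
  apply: divr_gt0 => //.
  by rewrite lt0r sqr_ge0 andbT sqrf_eq0 subr_eq0.
have hF : \forall e \near 0^'+, forall k : 'I_N, k != i -> 1 <= ln (1 + Cc k / e).
  apply: filter_forall => k; case: (eqVneq k i) => [->|ki].
    by apply: nearW.
  by apply: filterS (@near_ln R (Cc k) 1 (hC k ki)) => x H _.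
have hP : \forall e \near 0^'+, forall p : ('I_N * 'I_N)%type, p.1 != i -> p.2 != i ->
   `|dFlog2 (Cc p.1 + e) (Cc p.2 + e)| <= `|dFlog2 (Cc p.1) (Cc p.2)| + 1.
  apply: filter_forall => -[a b] /=.
  case: (eqVneq a i) => [->|ai]; first by apply: nearW.
  case: (eqVneq b i) => [->|bi]; first by apply: nearW.
  by apply: filterS (@dF2_bnd R (Cc a) (Cc b) (hC a ai) (hC b bi)) => x H _ _.
apply/cvgryPge => M.
have hG := @growth R c A K1 K2 M c0 A0.
near=> e.
have e0 : 0 < e by near: e; exact: nbhs_right_gt.
have hev : (dp * h - dm * h) ^+ 2 / 4 * (e^-1) ^+ 2 / ln (1 + A / e) ^+ 4
     <= (dFlog1 e (dp * h + e) - dFlog1 e (dm * h + e)) ^+ 2.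
  by near: e; exact: hA.
have hg : M <= c * (e^-1) ^+ 2 / ln (1 + A / e) ^+ 4 - K1 * e^-1 - K2.
  by near: e; exact: hG.
have hln : forall k : 'I_N, k != i -> 1 <= ln (1 + Cc k / e).
  by near: e; exact: hF.
have hpr : forall p : ('I_N * 'I_N)%type, p.1 != i -> p.2 != i ->
   `|dFlog2 (Cc p.1 + e) (Cc p.2 + e)| <= `|dFlog2 (Cc p.1) (Cc p.2)| + 1.
  by near: e; exact: hP.
set J := Jac h (ueps h i dp dm U e).
apply: (le_trans _ (ler_norm _)).
apply: (le_trans _ (tr_lb _ _ J i)).
have hJi : J i i ^+ 2 >= c * (e^-1) ^+ 2 / ln (1 + A / e) ^+ 4.
  rewrite /J Jac_diag // !hu Ci CS CP add0r.
  have Lp : 0 < ln (1 + A / e) by apply: ln_gt0; have := divr_gt0 A0 e0; lra.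
  have -> : c * e^-1 ^+ 2 / ln (1 + A / e) ^+ 4 = h^-1 ^+ 2 *
      ((dp * h - dm * h) ^+ 2 / 4 * e^-1 ^+ 2 / ln (1 + A / e) ^+ 4).
    rewrite /c; field; rewrite ?expf_neq0 ?gt_eqF //.
  by rewrite exprMn sqrrN ler_pM2l ?exprn_gt0 ?invr_gt0.
have hS : \sum_a \sum_b (a != b)%:R * (`|J a b| * `|J b a|) <= K1 * e^-1 + K2.
  rewrite /K1 /K2 mulr_suml -big_split /=; apply: ler_sum => a _.
  rewrite mulr_suml -big_split /=; apply: ler_sum => b _.
  have hh2 : 0 < h ^- 2 by rewrite invr_gt0 exprn_gt0.
  have Mx : 0 <= Msum * e^-1 by rewrite mulr_ge0 // invr_ge0 ltW.
  case: (eqVneq a b) => [->|ab].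
    rewrite mul0r addr_ge0 // ?mulr_ge0 ?(ltW hh2) // invr_ge0 ltW //.
  rewrite mul1r.
  have h1 := @Jac_off R N h hh (ueps h i dp dm U e) a b ab.
  have h2 := @Jac_off R N h hh (ueps h i dp dm U e) b a ltac:(by rewrite eq_sym).
  apply: le_trans (ler_pM (normr_ge0 _) (normr_ge0 _) h1 h2) _.
  rewrite !hu.
  set X := `|dFlog2 (Cc a + e) (Cc b + e)|.
  set Y := `|dFlog2 (Cc b + e) (Cc a + e)|.
  have -> : h^-1 * X * (h^-1 * Y) = h ^- 2 * (X * Y).
    by field; rewrite gt_eqF.
  have -> : h ^- 2 * Msum * e^-1 + h ^- 2 * Kp a b = h ^- 2 * (Msum * e^-1 + Kp a b).
    by ring.
  rewrite ler_pM2l //.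
  case: (eqVneq a i) => [ai|ai].
    rewrite ai in X Y ab *; rewrite /X /Y Ci add0r.
    have bi : b != i by rewrite eq_sym.
    apply: le_trans (@nb_bound R (Cc b) e (hC b bi) e0 (hln b bi)) _.
    apply: le_trans (_ : Msum * e^-1 <= _); last by rewrite lerDl.
    by apply: ler_wpM2r; [rewrite invr_ge0 ltW|exact: hM].
  case: (eqVneq b i) => [bi|bi].
    rewrite bi in X Y ab *; rewrite /X /Y Ci add0r mulrC.
    apply: le_trans (@nb_bound R (Cc a) e (hC a ai) e0 (hln a ai)) _.
    apply: le_trans (_ : Msum * e^-1 <= _); last by rewrite lerDl.
    by apply: ler_wpM2r; [rewrite invr_ge0 ltW|exact: hM].
  apply: le_trans (_ : Kp a b <= _); last by rewrite lerDr.
  apply: ler_pM; rewrite ?normr_ge0 //.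
    exact: (hpr (a, b) ai bi).
  exact: (hpr (b, a) bi ai).
lra.
Unshelve. all: by end_near.
Qed.

Theorem mainTheorem12 (R : realType) (N : nat) (hN : (3 <= N)%N) (h : R)
  (hh : 0 < h) (i : 'I_N) (dp dm : R) (hdp : 0 < dp) (hdm : 0 < dm)
  (hd : dp != dm) (U : 'I_N -> R)
  (hU : forall k : 'I_N, k != i -> k != ordS i -> k != ord_pred i -> 0 < U k) :
  (`| \tr (Jac h (ueps h i dp dm U eps) *m Jac h (ueps h i dp dm U eps)) |
     @[eps --> 0^'+] --> +oo)
  /\ (forall eps : R, 0 < eps ->
        Num.sqrt (`| \tr (Jac h (ueps h i dp dm U eps) *m
                          Jac h (ueps h i dp dm U eps)) | / N%:R)
        <= spectral_radius (Jac h (ueps h i dp dm U eps)))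
  /\ (spectral_radius (Jac h (ueps h i dp dm U eps)) @[eps --> 0^'+] --> +oo).
Proof.
have P1 := @part1 R N hN h hh i dp dm hdp hdm hd U hU.
have n0 : (0 < N)%N by apply: leq_trans hN.
have P2 : forall eps : R, 0 < eps ->
        Num.sqrt (`| \tr (Jac h (ueps h i dp dm U eps) *m
                          Jac h (ueps h i dp dm U eps)) | / N%:R)
        <= spectral_radius (Jac h (ueps h i dp dm U eps)).
  by move=> eps _; exact: spec_bound.
split => //; split => //.
apply/cvgryPge => M.
move/cvgryPge : P1 => /(_ (N%:R * M ^+ 2)) P1.
near=> e.
have e0 : 0 < e by near: e; exact: nbhs_right_gt.
have H : N%:R * M ^+ 2 <= `| \tr (Jac h (ueps h i dp dm U e) *m
                          Jac h (ueps h i dp dm U e)) |.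
  by near: e; exact: P1.
apply: le_trans (P2 e e0).
apply: (le_trans (ler_norm M)).
rewrite -sqrtr_sqr ler_sqrt.
  by rewrite ler_pdivlMr ?ltr0n // mulrC.
by rewrite divr_ge0.
Unshelve. all: by end_near.
Qed.
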